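(* Let $\mathcal{A}$ be a unital commutative $C^*$-algebra and let $\tau:\mathcal{A}\to\mathcal{A}$ be a surjective map. Let $A,B:H_\mathcal{A}\to H_\mathcal{A}$ be injective, continuous $\tau$-quasi-modular maps with $\dim_\mathcal{A}(A(H_\mathcal{A}))\geq 2$. Suppose that for every $x\in H_\mathcal{A}$ there is $\lambda_x\in\mathcal{A}$ with $Bx=\lambda_xAx$. Then there exists $\lambda\in\mathcal{A}$ such that $B=\lambda A$.
   Context: $H_\mathcal{A}=H\otimes\mathcal{A}$ is the standard Hilbert $\mathcal{A}$-module over a separable infinite-dimensional Hilbert space $H$ (left module, inner product $\mathcal{A}$-linear in the first variable). A map $A:H_\mathcal{A}\to H_\mathcal{A}$ is called $\tau$-quasi-modular, for a map $\tau:\mathcal{A}\to\mathcal{A}$, if it is additive and $A(\lambda x)=\tau(\lambda)A(x)$ for all $\lambda\in\mathcal{A}$, $x\in H_\mathcal{A}$. $\dim_\mathcal{A}(A(H_\mathcal{A}))\ge 2$ means that $A(H_\mathcal{A})$ contains at least two nonzero mutually orthogonal elements (i.e. it is not generated by a single element). *)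

(* Defs.v *)
From Stdlib Require Import Reals.
Open Scope R_scope.

Definition Cplx : Type := (R * R)%type.
Definition Cadd (c d : Cplx) : Cplx := (fst c + fst d, snd c + snd d).
Definition Cmul (c d : Cplx) : Cplx :=
  (fst c * fst d - snd c * snd d, fst c * snd d + snd c * fst d).
Definition Cone : Cplx := (1, 0).
Definition Cconj (c : Cplx) : Cplx := (fst c, - snd c).
Definition Cabs (c : Cplx) : R := sqrt (fst c ^ 2 + snd c ^ 2).

Record UnitalCStarAlgebra := {
  car :> Type;
  zero : car; one : car;
  add : car -> car -> car; opp : car -> car; mul : car -> car -> car;
  scal : Cplx -> car -> car; star : car -> car; norm : car -> R;
  addA : forall x y z, add x (add y z) = add (add x y) z;
  addC : forall x y, add x y = add y x;
  add0 : forall x, add zero x = x;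
  addN : forall x, add x (opp x) = zero;
  mulA : forall x y z, mul x (mul y z) = mul (mul x y) z;
  mul1l : forall x, mul one x = x;
  mul1r : forall x, mul x one = x;
  mulDl : forall x y z, mul (add x y) z = add (mul x z) (mul y z);
  mulDr : forall x y z, mul x (add y z) = add (mul x y) (mul x z);
  scalA : forall c d x, scal (Cmul c d) x = scal c (scal d x);
  scal1 : forall x, scal Cone x = x;
  scalDr : forall c x y, scal c (add x y) = add (scal c x) (scal c y);
  scalDl : forall c d x, scal (Cadd c d) x = add (scal c x) (scal d x);
  scal_mull : forall c x y, scal c (mul x y) = mul (scal c x) y;
  scal_mulr : forall c x y, scal c (mul x y) = mul x (scal c y);
  starK : forall x, star (star x) = x;
  starD : forall x y, star (add x y) = add (star x) (star y);
  starM : forall x y, star (mul x y) = mul (star y) (star x);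
  starZ : forall c x, star (scal c x) = scal (Cconj c) (star x);
  norm_ge0 : forall x, 0 <= norm x;
  norm_eq0 : forall x, norm x = 0 -> x = zero;
  norm_triangle : forall x y, norm (add x y) <= norm x + norm y;
  normZ : forall c x, norm (scal c x) = Cabs c * norm x;
  normM : forall x y, norm (mul x y) <= norm x * norm y;
  norm_cstar : forall x, norm (mul (star x) x) = norm x ^ 2;
  complete : forall u : nat -> car,
    (forall eps, eps > 0 -> exists N, forall m n, (m >= N)%nat -> (n >= N)%nat ->
        norm (add (u m) (opp (u n))) < eps) ->
    exists l, forall eps, eps > 0 -> exists N, forall n, (n >= N)%nat ->
        norm (add (u n) (opp l)) < eps
}.

Section HilbertModule.
Variable A : UnitalCStarAlgebra.

Definition commutativeA : Prop := forall x y : A, mul A x y = mul A y x.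

Definition cvA (u : nat -> A) (l : A) : Prop :=
  forall eps, eps > 0 -> exists N, forall n, (n >= N)%nat -> norm A (add A (u n) (opp A l)) < eps.

Fixpoint psum (f : nat -> A) (n : nat) : A :=
  match n with O => zero A | S k => add A (psum f k) (f k) end.

(* Elements of H_A = H (x) A, H separable infinite-dimensional (basis indexed by nat):
   sequences x with sum_n x_n^* x_n norm-convergent in A. *)
Definition inHA (x : nat -> A) : Prop :=
  exists l, cvA (psum (fun k => mul A (star A (x k)) (x k))) l.

(* <x,y> = sum_n x_n y_n^*  (A-linear in the first variable): "ip x y l" means <x,y> = l *)
Definition ip (x y : nat -> A) (l : A) : Prop :=
  cvA (psum (fun k => mul A (x k) (star A (y k)))) l.

Definition hnorm (x : nat -> A) (r : R) : Prop :=
  exists l, ip x x l /\ r = sqrt (norm A l).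

Definition seq_sub (x y : nat -> A) : nat -> A := fun n => add A (x n) (opp A (y n)).
Definition seq_add (x y : nat -> A) : nat -> A := fun n => add A (x n) (y n).
Definition seq_smul (lam : A) (x : nat -> A) : nat -> A := fun n => mul A lam (x n).
Definition seq0 : nat -> A := fun _ => zero A.

(* A map H_A -> H_A is represented by T : (nat -> A) -> (nat -> A) mapping H_A into H_A;
   all further properties only concern its values on H_A. *)
Definition maps_HA (T : (nat -> A) -> (nat -> A)) : Prop :=
  forall x, inHA x -> inHA (T x).

Definition quasi_modular (tau : A -> A) (T : (nat -> A) -> (nat -> A)) : Prop :=
  (forall x y, inHA x -> inHA y -> T (seq_add x y) = seq_add (T x) (T y)) /\
  (forall lam x, inHA x -> T (seq_smul lam x) = seq_smul (tau lam) (T x)).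

Definition injective_HA (T : (nat -> A) -> (nat -> A)) : Prop :=
  forall x y, inHA x -> inHA y -> T x = T y -> x = y.

Definition continuous_HA (T : (nat -> A) -> (nat -> A)) : Prop :=
  forall x, inHA x -> forall eps, eps > 0 -> exists delta, delta > 0 /\
    forall y r, inHA y -> hnorm (seq_sub y x) r -> r < delta ->
      forall s, hnorm (seq_sub (T y) (T x)) s -> s < eps.

(* dim_A (T(H_A)) >= 2 : the image contains two nonzero mutually orthogonal elements *)
Definition image_dim_ge2 (T : (nat -> A) -> (nat -> A)) : Prop :=
  exists x y, inHA x /\ inHA y /\ T x <> seq0 /\ T y <> seq0 /\ ip (T x) (T y) (zero A).

End HilbertModule.

(* Main.v *)
Require Import Defs.
From Stdlib Require Import Reals Lra Lia Ring FunctionalExtensionality.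
Section S.
Variable A : UnitalCStarAlgebra.
Hypothesis comm : commutativeA A.
Definition subA (x y : A) := add A x (opp A y).
Lemma Aring : ring_theory (zero A) (one A) (add A) (mul A) subA (opp A) (@eq (car A)).
Proof.
constructor; intros.
- apply add0.
- apply addC.
- apply addA.
- apply mul1l.
- apply comm.
- apply mulA.
- apply mulDl.
- reflexivity.
- apply addN.
Qed.
Add Ring Aring : Aring.

Lemma cancelA (X : A) : X = add A X X -> X = zero A.
Proof. intro H.
assert (E : add A X (opp A X) = add A (add A X X) (opp A X)) by (rewrite <- H; reflexivity).
transitivity (add A (add A X X) (opp A X)). ring. rewrite <- E. ring. Qed.

Lemma star0 : star A (zero A) = zero A.
Proof. apply cancelA. rewrite <- starD. f_equal. ring. Qed.

Lemma scal0 (x : A) : scal A (0%R,0%R) x = zero A.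
Proof. apply cancelA. rewrite <- scalDl. f_equal. unfold Cadd; simpl. f_equal; ring. Qed.

Lemma norm0 : norm A (zero A) = 0%R.
Proof. rewrite <- (scal0 (zero A)), normZ. unfold Cabs; simpl.
replace (0 * (0 * 1) + 0 * (0 * 1))%R with 0%R by ring. rewrite sqrt_0; ring. Qed.

Lemma scal_add (a b : R) (x : A) : add A (scal A (a,0%R) x) (scal A (b,0%R) x) = scal A ((a+b)%R,0%R) x.
Proof. rewrite <- scalDl. f_equal. unfold Cadd; simpl. f_equal; ring. Qed.

Lemma scal_sub (a b : R) (x : A) : add A (scal A (a,0%R) x) (opp A (scal A (b,0%R) x)) = scal A ((a-b)%R,0%R) x.
Proof. replace (scal A (a,0%R) x) with (scal A ((a-b+b)%R,0%R) x) by (f_equal; f_equal; ring).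
rewrite <- (scal_add (a-b) b x). ring. Qed.

Lemma star_one : star A (one A) = one A.
Proof. rewrite <- (mul1r A (star A (one A))). rewrite <- (starK A (one A)) at 2.
rewrite <- starM. rewrite mul1r. apply starK. Qed.

Lemma star_scal_one (a : R) : star A (scal A (a,0%R) (one A)) = scal A (a,0%R) (one A).
Proof. rewrite starZ, star_one. unfold Cconj; simpl. rewrite Ropp_0. reflexivity. Qed.

Lemma scal_mul_one (a b : R) : mul A (scal A (a,0%R) (one A)) (scal A (b,0%R) (one A)) = scal A ((a*b)%R,0%R) (one A).
Proof. rewrite <- scal_mull, mul1l, <- scalA. f_equal. unfold Cmul; simpl. f_equal; ring. Qed.

Lemma Cabs_real (a : R) : Cabs (a,0%R) = Rabs a.
Proof. unfold Cabs; simpl. replace (a * (a * 1) + 0 * (0 * 1))%R with (Rsqr a) by (unfold Rsqr; ring). apply sqrt_Rsqr_abs. Qed.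


Definition mask (P : nat -> bool) (x : nat -> A) : nat -> A :=
  fun k => if P k then x k else zero A.

Lemma psum_ext (f g : nat -> A) : (forall k, f k = g k) -> forall n, psum A f n = psum A g n.
Proof. intros H n; induction n; simpl; [reflexivity| rewrite IHn, H; reflexivity]. Qed.

Lemma psum_true (f : nat -> A) (P : nat -> bool) N :
  (forall k, (N <= k)%nat -> P k = true) -> forall m, (N <= m)%nat ->
  psum A (fun k => if P k then f k else zero A) m =
  add A (psum A (fun k => if P k then f k else zero A) N) (subA (psum A f m) (psum A f N)).
Proof. intros HP m; induction m; intro Hm.
- assert (N = 0%nat) by lia; subst. unfold subA; ring.
- destruct (Nat.eq_dec N (S m)) as [->|Hne].
  + unfold subA; ring.
  + simpl. rewrite IHm by lia. rewrite (HP m) by lia. unfold subA; ring.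
Qed.

Lemma psum_false (f : nat -> A) (P : nat -> bool) N :
  (forall k, (N <= k)%nat -> P k = false) -> forall m, (N <= m)%nat ->
  psum A (fun k => if P k then f k else zero A) m =
  psum A (fun k => if P k then f k else zero A) N.
Proof. intros HP m; induction m; intro Hm.
- assert (N = 0%nat) by lia; subst. reflexivity.
- destruct (Nat.eq_dec N (S m)) as [->|Hne].
  + reflexivity.
  + simpl. rewrite IHm by lia. rewrite (HP m) by lia. ring.
Qed.

Lemma inHA_mask (P : nat -> bool) (x : nat -> A) :
  inHA A x -> (exists N, forall k, (N <= k)%nat -> P k = P N) -> inHA A (mask P x).
Proof.
intros [l Hl] [N HN].
set (f := fun k => mul A (star A (x k)) (x k)).
assert (Ht : forall k, mul A (star A (mask P x k)) (mask P x k) = (if P k then f k else zero A)).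
{ intro k; unfold mask, f; destruct (P k); [reflexivity | rewrite star0; ring]. }
unfold inHA. unfold cvA in *.
destruct (P N) eqn:EPN.
- exists (add A (psum A (fun k => if P k then f k else zero A) N) (subA l (psum A f N))).
  intros eps He. destruct (Hl eps He) as [N0 HN0]. exists (max N N0). intros n Hn.
  rewrite (psum_ext _ _ Ht n). rewrite (psum_true f P N) by (try lia; intros; rewrite HN by lia; auto).
  replace (add A (add A (psum A (fun k : nat => if P k then f k else zero A) N)
          (subA (psum A f n) (psum A f N)))
     (opp A (add A (psum A (fun k : nat => if P k then f k else zero A) N)
          (subA l (psum A f N))))) with (add A (psum A f n) (opp A l)) by (unfold subA; ring).
  apply HN0; lia.
- exists (psum A (fun k => if P k then f k else zero A) N).
  intros eps He. exists N. intros n Hn.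
  rewrite (psum_ext _ _ Ht n). rewrite (psum_false f P N) by (try lia; intros; rewrite HN by lia; auto).
  rewrite addN, norm0. lra.
Qed.

Lemma psum_mul (a : A) (f : nat -> A) n : psum A (fun k => mul A a (f k)) n = mul A a (psum A f n).
Proof. induction n; simpl; [ring | rewrite IHn; ring]. Qed.

Lemma inHA_smul (c : A) (x : nat -> A) : inHA A x -> inHA A (seq_smul A c x).
Proof.
intros [l Hl]. set (a := mul A (star A c) c).
exists (mul A a l). unfold cvA in *.
intros eps He.
assert (Hn0 := norm_ge0 A a).
destruct (Hl (eps / (norm A a + 1))%R) as [N0 HN0].
{ apply Rdiv_lt_0_compat; lra. }
exists N0. intros n Hn.
rewrite (psum_ext _ (fun k => mul A a (mul A (star A (x k)) (x k)))).
2:{ intro k; unfold seq_smul, a; rewrite starM; ring. }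
rewrite psum_mul.
replace (add A (mul A a (psum A (fun k : nat => mul A (star A (x k)) (x k)) n)) (opp A (mul A a l)))
  with (mul A a (add A (psum A (fun k : nat => mul A (star A (x k)) (x k)) n) (opp A l))) by ring.
eapply Rle_lt_trans. apply normM.
specialize (HN0 n Hn).
set (d := norm A (add A (psum A (fun k : nat => mul A (star A (x k)) (x k)) n) (opp A l))) in *.
assert (Hd := norm_ge0 A (add A (psum A (fun k : nat => mul A (star A (x k)) (x k)) n) (opp A l))).
fold d in Hd.
set (q := (eps / (norm A a + 1))%R) in *.
assert (Hq : (q * (norm A a + 1))%R = eps) by (unfold q; field; lra).
assert (q > 0)%R by (unfold q; apply Rdiv_lt_0_compat; lra).
nra.
Qed.

Lemma inHA_seq0 : inHA A (seq0 A).
Proof. exists (zero A). intros eps He. exists 0%nat. intros n _.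
rewrite (psum_ext _ (fun _ => zero A)). 2:{ intro; unfold seq0; rewrite star0; ring. }
replace (psum A (fun _ => zero A) n) with (zero A). rewrite addN, norm0; lra.
induction n; simpl; [reflexivity| rewrite <- IHn; ring]. Qed.


Definition xs : nat -> A := fun k => scal A (((/2)^k)%R, 0%R) (one A).
Definition ds : nat -> A := fun k => scal A ((2^k)%R, 0%R) (one A).

Lemma ds_xs k : mul A (ds k) (xs k) = one A.
Proof. unfold ds, xs. rewrite scal_mul_one. rewrite <- Rpow_mult_distr.
rewrite Rinv_r by lra. rewrite pow1. apply scal1. Qed.

Lemma psum_xs n : psum A (fun k => mul A (star A (xs k)) (xs k)) n
   = scal A ((4/3 * (1 - (/4)^n))%R, 0%R) (one A).
Proof. induction n; simpl.
- replace (4/3 * (1 - 1))%R with 0%R by field. rewrite scal0. reflexivity.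
- rewrite IHn. unfold xs. rewrite star_scal_one, scal_mul_one, scal_add.
  f_equal. f_equal. rewrite <- Rpow_mult_distr.
  replace (/2 * /2)%R with (/4)%R by field. field.
Qed.

Lemma inHA_xs : inHA A xs.
Proof.
exists (scal A ((4/3)%R,0%R) (one A)). intros eps He.
assert (H1 := norm_ge0 A (one A)).
destruct (pow_lt_1_zero (/4) ltac:(rewrite Rabs_pos_eq; lra) (eps / (4/3 * (norm A (one A) + 1)))%R)
  as [N HN].
{ apply Rdiv_lt_0_compat; lra. }
exists N. intros n Hn. rewrite psum_xs, scal_sub, normZ, Cabs_real.
specialize (HN n Hn).
replace (4 / 3 * (1 - (/ 4) ^ n) - 4 / 3)%R with (- (4/3) * (/4)^n)%R by ring.
rewrite Rabs_mult. rewrite Rabs_Ropp. rewrite (Rabs_pos_eq (4/3)) by lra.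
set (q := Rabs ((/ 4) ^ n)) in *.
assert (q >= 0)%R by (unfold q; apply Rle_ge, Rabs_pos).
set (e := (eps / (4 / 3 * (norm A (one A) + 1)))%R) in *.
assert (He2 : (e * (4 / 3 * (norm A (one A) + 1)))%R = eps) by (unfold e; field; lra).
nra.
Qed.


Lemma mask_split (P : nat -> bool) (x : nat -> A) :
  x = seq_add A (mask P x) (mask (fun k => negb (P k)) x).
Proof. apply functional_extensionality; intro k. unfold seq_add, mask.
destruct (P k); simpl; ring. Qed.

Lemma ev_negb (P : nat -> bool) : (exists N, forall k, (N <= k)%nat -> P k = P N) ->
  (exists N, forall k, (N <= k)%nat -> negb (P k) = negb (P N)).
Proof. intros [N H]; exists N; intros k Hk; rewrite H; auto. Qed.

Lemma key_eq (u v w X Y : A) : add A (mul A v X) (mul A w Y) = mul A u (add A X Y) ->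
  mul A (subA u v) X = mul A (subA w u) Y.
Proof. intro E.
transitivity (add A (mul A u (add A X Y)) (add A (opp A (mul A v X)) (opp A (mul A u Y)))).
unfold subA; ring. rewrite <- E. unfold subA; ring. Qed.

Lemma T0 (tau : A -> A) (T : (nat -> A) -> (nat -> A)) : quasi_modular A tau T -> T (seq0 A) = seq0 A.
Proof. intros [qadd _].
assert (E : seq_add A (seq0 A) (seq0 A) = seq0 A) by
  (apply functional_extensionality; intro; unfold seq_add, seq0; ring).
assert (H := qadd (seq0 A) (seq0 A) inHA_seq0 inHA_seq0). rewrite E in H.
apply functional_extensionality; intro k. apply cancelA.
exact (equal_f H k). Qed.

Section Main.
Variable tau : A -> A.
Variables TA TB : (nat -> A) -> (nat -> A).
Hypothesis surj : forall b : A, exists a : A, tau a = b.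
Hypothesis injA : injective_HA A TA.
Hypothesis qA : quasi_modular A tau TA.
Hypothesis qB : quasi_modular A tau TB.
Hypothesis hypL : forall x, inHA A x -> exists lam : A, TB x = seq_smul A lam (TA x).

Lemma DL (y z : nat -> A) (c d : A) : inHA A y -> inHA A z ->
  (forall k, y k = zero A \/ z k = zero A) ->
  seq_smul A c (TA y) = seq_smul A d (TA z) -> seq_smul A c (TA y) = seq0 A.
Proof.
intros Hy Hz Hdis E.
destruct (surj c) as [c' Hc]. destruct (surj d) as [d' Hd]. subst c d.
destruct qA as [_ qs].
rewrite <- !qs in E by assumption.
apply injA in E; try apply inHA_smul; try assumption.
assert (E2 : seq_smul A c' y = seq0 A).
{ apply functional_extensionality; intro k. unfold seq0.
  assert (Ek := equal_f E k). unfold seq_smul in *.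
  destruct (Hdis k) as [H|H]; rewrite H in *; [ring| rewrite Ek; ring]. }
rewrite <- qs by assumption. rewrite E2. apply (T0 tau); assumption.
Qed.

Lemma SL (x : nat -> A) (P : nat -> bool) (lx : A) : inHA A x ->
  (exists N, forall k, (N <= k)%nat -> P k = P N) ->
  TB x = seq_smul A lx (TA x) ->
  TB (mask P x) = seq_smul A lx (TA (mask P x)).
Proof.
intros Hx HP Ex.
assert (Hy : inHA A (mask P x)) by (apply inHA_mask; auto).
assert (Hz : inHA A (mask (fun k => negb (P k)) x)) by (apply inHA_mask; auto; apply ev_negb; auto).
destruct (hypL _ Hy) as [ly Ey]. destruct (hypL _ Hz) as [lz Ez].
assert (Sx := mask_split P x).
destruct qA as [aA _]. destruct qB as [aB _].
assert (EA : TA x = seq_add A (TA (mask P x)) (TA (mask (fun k => negb (P k)) x)))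
  by (rewrite Sx at 1; apply aA; auto).
assert (EB : TB x = seq_add A (TB (mask P x)) (TB (mask (fun k => negb (P k)) x)))
  by (rewrite Sx at 1; apply aB; auto).
assert (D : seq_smul A (subA lx ly) (TA (mask P x)) =
            seq_smul A (subA lz lx) (TA (mask (fun k => negb (P k)) x))).
{ apply functional_extensionality; intro k. unfold seq_smul. apply key_eq.
  assert (H1 := equal_f EB k). rewrite Ex, Ey, Ez, EA in H1.
  unfold seq_smul, seq_add in H1. symmetry. exact H1. }
apply DL in D; auto.
2:{ intro k; unfold mask; destruct (P k); simpl; auto. }
rewrite Ey. apply functional_extensionality; intro k.
assert (H2 := equal_f D k). unfold seq_smul, seq0 in *.
transitivity (add A (mul A lx (TA (mask P x) k)) (opp A (mul A (subA lx ly) (TA (mask P x) k)))).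
unfold subA; ring. rewrite H2. ring.
Qed.

Variable l0 : A.
Hypothesis H0 : TB xs = seq_smul A l0 (TA xs).

Lemma Ek k : TB (mask (Nat.eqb k) xs) = seq_smul A l0 (TA (mask (Nat.eqb k) xs)).
Proof. apply SL; auto. apply inHA_xs.
exists (S k). intros j Hj. destruct (Nat.eqb_spec k j); [lia|].
destruct (Nat.eqb_spec k (S k)); [lia|]. reflexivity. Qed.

Definition tr n (x : nat -> A) := mask (fun k => Nat.ltb k n) x.
Definition tl n (x : nat -> A) := mask (fun k => negb (Nat.ltb k n)) x.

Lemma ev_lt n : exists N, forall k, (N <= k)%nat -> Nat.ltb k n = Nat.ltb N n.
Proof. exists n. intros k Hk. destruct (Nat.ltb_spec k n); [lia|].
destruct (Nat.ltb_spec n n); [lia|]. reflexivity. Qed.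

Lemma fin (x : nat -> A) : inHA A x -> forall n, TB (tr n x) = seq_smul A l0 (TA (tr n x)).
Proof. intros Hx n. induction n.
- assert (E : tr 0 x = seq0 A) by (apply functional_extensionality; intro; reflexivity).
  rewrite E, (T0 tau TB), (T0 tau TA) by assumption.
  apply functional_extensionality; intro; unfold seq_smul, seq0; ring.
- set (m := mul A (x n) (ds n)).
  assert (E : tr (S n) x = seq_add A (tr n x) (seq_smul A m (mask (Nat.eqb n) xs))).
  { apply functional_extensionality; intro k. unfold tr, mask, seq_add, seq_smul, m.
    destruct (Nat.ltb_spec k n), (Nat.ltb_spec k (S n)), (Nat.eqb_spec n k); try lia.
    - ring.
    - subst k. rewrite <- mulA, ds_xs. ring.
    - ring. }
  assert (Htr : inHA A (tr n x)) by (apply inHA_mask; auto; apply ev_lt).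
  assert (Hy : inHA A (mask (Nat.eqb n) xs)).
  { apply inHA_mask. apply inHA_xs. exists (S n). intros j Hj. destruct (Nat.eqb_spec n j); [lia|].
    destruct (Nat.eqb_spec n (S n)); [lia|]. reflexivity. }
  assert (Hsy := inHA_smul m _ Hy).
  destruct qA as [aA sA]. destruct qB as [aB sB].
  rewrite E, aA, aB, sA, sB, IHn, Ek by assumption.
  apply functional_extensionality; intro k; unfold seq_smul, seq_add; ring.
Qed.

Lemma final (x : nat -> A) : inHA A x -> TB x = seq_smul A l0 (TA x).
Proof. intro Hx. destruct (hypL x Hx) as [lx Ex].
assert (Hn : forall n, seq_smul A lx (TA (tr n x)) = seq_smul A l0 (TA (tr n x))).
{ intro n. rewrite <- fin by assumption. symmetry. apply SL; auto. apply ev_lt. }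
destruct (surj (subA lx l0)) as [c' Hc].
destruct qA as [aA sA].
assert (Hc' : forall n, seq_smul A (subA lx l0) (TA x) = TA (seq_smul A c' (tl n x))).
{ intro n. assert (Htr : inHA A (tr n x)) by (apply inHA_mask; auto; apply ev_lt).
  assert (Htl : inHA A (tl n x)) by (apply inHA_mask; auto; apply ev_negb; apply ev_lt).
  rewrite sA, Hc by assumption.
  assert (Sx := mask_split (fun k => Nat.ltb k n) x). fold (tr n x) (tl n x) in Sx.
  rewrite Sx at 1. rewrite aA by assumption.
  apply functional_extensionality; intro k. assert (H := equal_f (Hn n) k).
  unfold seq_smul, seq_add in *.
  transitivity (add A (mul A (subA lx l0) (TA (tl n x) k))
     (add A (mul A lx (TA (tr n x) k)) (opp A (mul A l0 (TA (tr n x) k))))).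
  unfold subA. fold (tl n x). match goal with |- ?a = ?b => change (@eq (car A) a b) end. ring. rewrite H. ring. }
assert (Z : seq_smul A c' x = seq0 A).
{ apply functional_extensionality; intro k.
  assert (E : TA (seq_smul A c' x) = TA (seq_smul A c' (tl (S k) x))).
  { rewrite sA, Hc by assumption. apply Hc'. }
  apply injA in E; try apply inHA_smul; auto.
  2:{ apply inHA_mask; auto; apply ev_negb; apply ev_lt. }
  assert (H := equal_f E k). unfold seq_smul, tl, mask, seq0 in *.
  destruct (Nat.ltb_spec k (S k)); [|lia]. simpl in H. rewrite H. ring. }
assert (Z2 : seq_smul A (subA lx l0) (TA x) = seq0 A).
{ rewrite <- Hc, <- sA, Z by assumption. apply (T0 tau TA). split; auto. }
rewrite Ex. apply functional_extensionality; intro k.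
assert (H := equal_f Z2 k). unfold seq_smul, seq0 in *.
transitivity (add A (mul A (subA lx l0) (TA x k)) (mul A l0 (TA x k))).
unfold subA; ring. rewrite H; ring.
Qed.

End Main.

End S.

Theorem lemma9 (A : UnitalCStarAlgebra) (tau : A -> A)
  (TA TB : (nat -> A) -> (nat -> A)) :
  commutativeA A ->
  (forall b : A, exists a : A, tau a = b) ->
  maps_HA A TA -> maps_HA A TB ->
  injective_HA A TA -> injective_HA A TB ->
  continuous_HA A TA -> continuous_HA A TB ->
  quasi_modular A tau TA -> quasi_modular A tau TB ->
  image_dim_ge2 A TA ->
  (forall x, inHA A x -> exists lam : A, TB x = seq_smul A lam (TA x)) ->
  exists lam : A, forall x, inHA A x -> TB x = seq_smul A lam (TA x).
Proof.
intros comm surj _ _ injA _ _ _ qA qB _ hypL.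
destruct (hypL _ (inHA_xs A comm)) as [l0 H0].
exists l0. intros x Hx. eapply final; eauto.
Qed.
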